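(* Let $A$ be a nonempty finite set of positive integers, let $n$ be a positive integer, and let $\alpha,\beta$ be positive integers with $\alpha\le\beta\le|A|$. Then: (a) If $\binom{|A|}{\alpha}=\sum_{d=1}^{\sup A}\mu(d)\binom{v(A,d)}{\alpha}$, then $\binom{|A|}{\beta}=\sum_{d=1}^{\sup A}\mu(d)\binom{v(A,d)}{\beta}$. (b) If $\binom{|A|}{\alpha}=\sum_{d\mid n}\mu(d)\binom{v(A,d)}{\alpha}$, then $\binom{|A|}{\beta}=\sum_{d\mid n}\mu(d)\binom{v(A,d)}{\beta}$. (c) If $\sum_{d=1}^{\sup A}\mu(d)\binom{v(A,d)}{\beta}=0$, then $\sum_{d=1}^{\sup A}\mu(d)\binom{v(A,d)}{\alpha}=0$. (d) If $\sum_{d\mid n}\mu(d)\binom{v(A,d)}{\beta}=0$, then $\sum_{d\mid n}\mu(d)\binom{v(A,d)}{\alpha}=0$.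
   Context: $\sup A$ is the largest element of $A$. $\mu$ is the Möbius function. For a positive integer $d$, $v(A,d)$ is the number of multiples of $d$ in $A$. Binomial coefficients $\binom{m}{k}$ are $0$ when $k>m$. *)

(* Defs.v *)
From mathcomp Require Import all_boot all_order all_algebra.
Set Implicit Arguments. Unset Strict Implicit. Unset Printing Implicit Defensive.
Import GRing.Theory Num.Theory.
Local Open Scope ring_scope.

Definition mobius (n : nat) : int :=
  if (n == 0)%N then 0
  else if all (fun p => (logn p n <= 1)%N) (primes n)
       then (-1) ^+ size (primes n) else 0.

(* A finite set of naturals is represented by a duplicate-free sequence. *)
Definition supA (A : seq nat) : nat := \max_(a <- A) a.

Definition v (A : seq nat) (d : nat) : nat := count (fun a => (d %| a)%N) A.

Definition S_sup (A : seq nat) (k : nat) : int :=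
  \sum_(1 <= d < (supA A).+1) mobius d * ('C(v A d, k))%:Z.

Definition S_div (A : seq nat) (n k : nat) : int :=
  \sum_(d <- divisors n) mobius d * ('C(v A d, k))%:Z.

(* Main.v *)
Require Import Defs.
From mathcomp Require Import all_boot all_order all_algebra.
Import GRing.Theory Num.Theory.
Local Open Scope ring_scope.

Lemma mobius_sq0 p d : prime p -> (0 < d)%N -> (p ^ 2 %| d)%N -> mobius d = 0.
Proof.
move=> pp d0 hd; rewrite /mobius (negbTE (lt0n_neq0 d0)).
have hl : (2 <= logn p d)%N by rewrite -pfactor_dvdn.
have pin : p \in primes d by rewrite -logn_gt0 (leq_trans _ hl).
case: allP => // /(_ p pin); by rewrite leqNgt hl.
Qed.

Lemma primes_mulp p e : prime p -> (0 < e)%N -> ~~ (p %| e)%N ->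
  perm_eq (primes (p * e)) (p :: primes e).
Proof.
move=> pp e0 npe; apply: uniq_perm; first exact: primes_uniq.
  by rewrite /= primes_uniq andbT mem_primes (negbTE npe) !andbF.
by move=> q; rewrite primesM ?(prime_gt0 pp) // (primes_prime pp) in_cons inE orbF.
Qed.

Lemma mobius_mulp p e : prime p -> (0 < e)%N -> ~~ (p %| e)%N ->
  mobius (p * e) = - mobius e.
Proof.
move=> pp e0 npe; have pe := @primes_mulp p e pp e0 npe.
have pe0 : (0 < p * e)%N by rewrite muln_gt0 prime_gt0.
rewrite /mobius (negbTE (lt0n_neq0 e0)) (negbTE (lt0n_neq0 pe0)).
rewrite (perm_all _ pe) (perm_size pe) /=.
have -> : (logn p (p * e) <= 1)%N.
  by rewrite (lognM _ (prime_gt0 pp) e0) (logn_prime _ pp) eqxx (logn_coprime (_ : coprime p e)) // prime_coprime.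
have -> : all (fun q => (logn q (p * e) <= 1)%N) (primes e) =
          all (fun q => (logn q e <= 1)%N) (primes e).
  apply: eq_in_all => q; rewrite mem_primes => /and3P[_ _ qe].
  rewrite (lognM _ (prime_gt0 pp) e0) (logn_prime _ pp).
  case: eqP => [eqp|]; last by rewrite add0n.
  by move: npe; rewrite -eqp qe.
by case: (all _ (primes e)); rewrite ?oppr0 // exprS mulN1r.
Qed.

Lemma mulnI' p : (0 < p)%N -> injective (muln p).
Proof. by move=> p0 x y /(congr1 (divn^~ p)); rewrite !mulKn. Qed.

Lemma mobius_sum m : (0 < m)%N ->
  \sum_(d <- divisors m) mobius d = (m == 1)%:R.
Proof.
move=> m0; case: (ltngtP m 1) => [|m1|->]; first by rewrite ltnNge m0.
  2: by rewrite /= big_cons big_nil addr0.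
set p := pdiv m; have pp : prime p by exact: pdiv_prime.
have p0 := prime_gt0 pp.
have pm : (p %| m)%N by exact: pdiv_dvd.
set m' := (m %/ p)%N; have em : m = (p * m')%N by rewrite mulnC divnK.
have m'0 : (0 < m')%N by move: m0; rewrite em muln_gt0 => /andP[].
rewrite ?gtn_eqF //.
rewrite (bigID (fun d => p %| d)%N) /= -[X in X + _]big_filter -[X in _ + X]big_filter.
have -> : \sum_(i <- [seq i <- divisors m | (p %| i)%N]) mobius i =
          \sum_(e <- divisors m') mobius (p * e).
  rewrite -(big_map (muln p) xpredT); apply: perm_big; apply: uniq_perm.
  - exact: filter_uniq (divisors_uniq _).
  - by rewrite (map_inj_uniq (@mulnI' p p0)) divisors_uniq.
  move=> d; rewrite mem_filter; case: (boolP (p %| d)%N) => /= pd.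
    have ed : d = (p * (d %/ p))%N by rewrite mulnC divnK.
    by rewrite {2}ed (mem_map (@mulnI' p p0)) -!dvdn_divisors // em {1}ed dvdn_pmul2l.
  by apply/esym/mapP => -[e _ ed]; move: pd; rewrite ed dvdn_mulr.
have -> : \sum_(i <- [seq i <- divisors m | ~~ (p %| i)%N]) mobius i =
          \sum_(i <- [seq i <- divisors m' | ~~ (p %| i)%N]) mobius i.
  apply: perm_big; apply: uniq_perm; try exact: filter_uniq (divisors_uniq _).
  move=> d; rewrite !mem_filter; case: (boolP (p %| d)%N) => //= pd.
  rewrite -!dvdn_divisors // em Gauss_dvdr // coprime_sym prime_coprime //.
rewrite big_filter (bigID (fun e => p %| e)%N) /= big1_seq; last first.
  move=> e /andP[pe]; rewrite -dvdn_divisors // => em'.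
  apply: (@mobius_sq0 p _ pp); first by rewrite muln_gt0 p0 (dvdn_gt0 m'0 em').
  by rewrite expnS expn1 dvdn_pmul2l.
rewrite add0r; apply/eqP; rewrite addr_eq0 -sumrN; apply/eqP.
rewrite big_seq_cond [X in _ = X]big_seq_cond; apply: eq_bigr => e /andP[em' pe].
rewrite -dvdn_divisors // in em'.
by rewrite mobius_mulp // (dvdn_gt0 m'0 em').
Qed.
Section Main.
Variable A : seq nat.
Local Notation N := (size A).
Definition aa (i : 'I_N) := nth 0%N A i.
Definition gg (B : {set 'I_N}) := (\big[gcdn/0]_(i in B) aa i)%N.

Lemma v_card d : v A d = #|[set i : 'I_N | (d %| aa i)%N]|.
Proof.
rewrite /v -sum1_count (big_nth 0%N) big_mkord sum1_card.
by apply: eq_card => i; rewrite inE.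
Qed.

Lemma dvd_gg d B : (d %| gg B)%N = (B \subset [set i : 'I_N | (d %| aa i)%N]).
Proof.
apply/dvdn_biggcdP/subsetP => h i /h; by rewrite ?inE.
Qed.

Lemma C_eq d k : 'C(v A d, k) = (\sum_(B : {set 'I_N} | #|B| == k) (d %| gg B))%N.
Proof.
rewrite v_card -cards_draws -sum1_card.
rewrite [RHS](eq_bigr (fun B => if (d %| gg B)%N then 1%N else 0%N)); last by move=> B _; case: (d %| gg B)%N.
rewrite -big_mkcondr /=; apply: eq_bigl => B.
by rewrite !inE andbC dvd_gg.
Qed.

Lemma gg_sub (B B' : {set 'I_N}) : B' \subset B -> (gg B %| gg B')%N.
Proof.
move=> sBB'; apply/dvdn_biggcdP => i iB'.
have := dvdnn (gg B); rewrite {2}/gg => /dvdn_biggcdP; apply.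
exact: (subsetP sBB').
Qed.

Lemma Posz_sum (I : Type) (r : seq I) (P : pred I) (F : I -> nat) :
  ((\sum_(i <- r | P i) F i)%N)%:Z = \sum_(i <- r | P i) (F i)%:Z.
Proof. by rewrite (big_morph Posz PoszD (erefl (Posz 0))). Qed.

Lemma S_gen (r : seq nat) k :
  \sum_(d <- r) mobius d * ('C(v A d, k))%:Z =
  \sum_(B : {set 'I_N} | #|B| == k) \sum_(d <- r) mobius d * ((d %| gg B)%N : nat)%:Z.
Proof.
rewrite exchange_big /=; apply: eq_bigr => d _.
by rewrite C_eq Posz_sum mulr_sumr.
Qed.

Lemma inner_eq (r : seq nat) m : uniq r -> (0 < m)%N ->
  (forall d, (d %| m)%N -> (d \in r) = true) ->
  \sum_(d <- r) mobius d * ((d %| m)%N : nat)%:Z = (m == 1)%:R.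
Proof.
move=> ur m0 hr; rewrite -mobius_sum //.
rewrite (eq_bigr (fun d => if (d %| m)%N then mobius d else 0)); last first.
  by move=> d _; case: (d %| m)%N; rewrite ?mulr1 ?mulr0.
rewrite -big_mkcond /= -big_filter; apply: perm_big; apply: uniq_perm.
- exact: filter_uniq.
- exact: divisors_uniq.
move=> d; rewrite mem_filter -dvdn_divisors //.
by case dm: (d %| m)%N => //=; rewrite hr.
Qed.

Lemma cnt_eq c k :
  (#|[set B : {set 'I_N} | (#|B| == k) && (gcdn c (gg B) == 1)%N]|)%:Z =
  \sum_(B : {set 'I_N} | #|B| == k) ((gcdn c (gg B) == 1)%N%:R : int).
Proof.
rewrite -sum1_card Posz_sum.
rewrite [RHS](eq_bigr (fun B => if (gcdn c (gg B) == 1)%N then (Posz 1) else 0)); last first.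
  by move=> B _; case: (gcdn c (gg B) == 1)%N.
by rewrite -big_mkcondr /=; apply: eq_bigl => B; rewrite inE.
Qed.

Lemma S_sup_cnt k : all (fun a => 0 < a)%N A -> (0 < k)%N ->
  S_sup A k = (#|[set B : {set 'I_N} | (#|B| == k) && (gcdn 0 (gg B) == 1)%N]|)%:Z.
Proof.
move=> Apos k0; rewrite cnt_eq /S_sup S_gen; apply: eq_bigr => B /eqP hB.
have /set0Pn [i iB] : B != set0 by rewrite -card_gt0 hB.
have gi : (gg B %| aa i)%N.
  have := dvdnn (gg B); rewrite {2}/gg => /dvdn_biggcdP; apply; exact: iB.
have ai0 : (0 < aa i)%N by apply: (all_nthP 0%N Apos).
have aiM : (aa i <= supA A)%N by apply: leq_bigmax_seq => //; apply: mem_nth.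
rewrite gcd0n; apply: inner_eq; first exact: iota_uniq.
  exact: dvdn_gt0 ai0 gi.
move=> d dg; rewrite mem_index_iota (dvdn_gt0 (dvdn_gt0 ai0 gi) dg) /= ltnS.
exact: leq_trans (dvdn_leq (dvdn_gt0 ai0 gi) dg) (leq_trans (dvdn_leq ai0 gi) aiM).
Qed.

Lemma S_div_cnt n k : (0 < n)%N ->
  S_div A n k = (#|[set B : {set 'I_N} | (#|B| == k) && (gcdn n (gg B) == 1)%N]|)%:Z.
Proof.
move=> n0; rewrite cnt_eq /S_div S_gen; apply: eq_bigr => B _.
rewrite (eq_big_seq (fun d => mobius d * ((d %| gcdn n (gg B))%N : nat)%:Z)); last first.
  by move=> d; rewrite -dvdn_divisors // dvdn_gcd => ->.
apply: inner_eq; first exact: divisors_uniq.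
  by rewrite gcdn_gt0 n0.
by move=> d dg; rewrite -dvdn_divisors // (dvdn_trans dg (dvdn_gcdl _ _)).
Qed.

Definition GG c k := [set B : {set 'I_N} | (#|B| == k) && (gcdn c (gg B) == 1)%N].

Lemma good_mono c (B B' : {set 'I_N}) : B' \subset B ->
  (gcdn c (gg B') == 1)%N -> (gcdn c (gg B) == 1)%N.
Proof.
move=> sB /eqP h; rewrite -dvdn1 -h dvdn_gcd dvdn_gcdl /=.
apply: dvdn_trans (dvdn_gcdr _ _) _; exact: gg_sub.
Qed.

Lemma part_a c al be : (al <= be)%N -> #|GG c al| = 'C(N, al) -> #|GG c be| = 'C(N, be).
Proof.
move=> ab h.
have eqa : GG c al = [set B : {set 'I_N} | #|B| == al].
  apply/eqP; rewrite eqEcard card_draws card_ord h leqnn andbT.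
  by apply/subsetP => B; rewrite !inE => /andP[].
rewrite -[X in 'C(X, _)]card_ord -card_draws.
apply: eq_card => B; rewrite !inE; case hB: (#|B| == be) => //=.
have : (0 < #|[set B' : {set 'I_N} | B' \subset B & #|B'| == al]|)%N.
  by rewrite cards_draws bin_gt0 (eqP hB).
case/card_gt0P => B'; rewrite inE => /andP[sB hB'].
apply: (good_mono _ _ _ sB).
have : B' \in GG c al by rewrite eqa inE.
by rewrite inE => /andP[].
Qed.

Lemma part_c c al be : (al <= be)%N -> (be <= N)%N -> #|GG c be| = 0%N -> #|GG c al| = 0%N.
Proof.
move=> ab bN h; apply/eqP; rewrite cards_eq0; apply/eqP; apply/setP => B'.
rewrite in_set0; apply/negP; rewrite inE => /andP[/eqP hB' gB'].
have : (0 < #|[set C : {set 'I_N} | C \subset ~: B' & #|C| == (be - al)%N]|)%N.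
  rewrite cards_draws bin_gt0.
  have e : (al + #|~: B'|)%N = N by rewrite -hB' cardsC card_ord.
  have e' : #|~: B'| = (N - al)%N by rewrite -[in RHS]e addKn.
  by rewrite e' leq_sub2r.
case/card_gt0P => C; rewrite inE => /andP[sC /eqP hC].
have dis : B' :&: C = set0.
  apply/setP => x; rewrite !inE; apply/negP => /andP[xB xC].
  by have := subsetP sC x xC; rewrite inE xB.
have : B' :|: C \in GG c be.
  rewrite inE cardsU dis cards0 subn0 hB' hC subnKC // eqxx /=.
  exact: good_mono _ _ _ (subsetUl _ _) gB'.
by move/eqP: h; rewrite cards_eq0 => /eqP ->; rewrite in_set0.
Qed.
End Main.

Theorem corollary5p3 (A : seq nat) (n alpha beta : nat) :
  uniq A -> A != [::] -> all (fun a => (0 < a)%N) A ->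
  (0 < n)%N -> (0 < alpha)%N -> (alpha <= beta)%N -> (beta <= size A)%N ->
  [/\ ('C(size A, alpha))%:Z = S_sup A alpha -> ('C(size A, beta))%:Z = S_sup A beta,
      ('C(size A, alpha))%:Z = S_div A n alpha -> ('C(size A, beta))%:Z = S_div A n beta,
      S_sup A beta = 0 -> S_sup A alpha = 0
    & S_div A n beta = 0 -> S_div A n alpha = 0].
Proof.
move=> uA An0 Apos n0 a0 ab bN.
have b0 : (0 < beta)%N := leq_trans a0 ab.
have Es k : (0 < k)%N -> S_sup A k = (#|GG A 0 k|)%:Z.
  by move=> k0; exact: S_sup_cnt.
have Ed k : S_div A n k = (#|GG A n k|)%:Z by exact: S_div_cnt.
have z0 : (0 : int) = Posz 0%N by [].
split.
- rewrite !Es // => -[h]; by rewrite (@part_a A _ _ _ ab (esym h)).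
- rewrite !Ed => -[h]; by rewrite (@part_a A _ _ _ ab (esym h)).
- rewrite !Es // z0 => -[h]; by rewrite (@part_c A _ _ _ ab bN h).
- rewrite !Ed z0 => -[h]; by rewrite (@part_c A _ _ _ ab bN h).
Qed.
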